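(* Let $K$ be a compact Hausdorff space having the extension property and let $I$ be any set. Then every isometric copy of $c_0(I)$ in $C(K)$ is complemented; i.e., for every linear isometric embedding $S:c_0(I)\to C(K)$, the image of $S$ is complemented in $C(K)$.
   Context: $C(K)$ denotes the Banach space of real-valued continuous functions on $K$ with the supremum norm. For a closed set $F\subseteq K$, an extension operator for $F$ in $K$ is a bounded linear map $E:C(F)\to C(K)$ such that $E(f)|_F=f$ for all $f\in C(F)$. $K$ has the extension property if every nonempty closed subset of $K$ admits an extension operator in $K$. *)

(* Defs.v *)
From HB Require Import structures.
From mathcomp Require Import all_boot all_order all_algebra.
From mathcomp Require Import all_classical all_reals all_analysis.
Set Implicit Arguments. Unset Strict Implicit. Unset Printing Implicit Defensive.
Import Order.TTheory GRing.Theory Num.Theory numFieldNormedType.Exports.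
Local Open Scope classical_set_scope.
Local Open Scope ring_scope.

(* Supremum norm of f over a set A (sup of |f| on A; sup set0 = 0). *)
Definition supn {T : Type} {R : realType} (A : set T) (f : T -> R) : R :=
  sup [set `|f t| | t in A].

(* Elements of C(F), F a subset of K, are represented by functions K -> R
   continuous on F (within F); two such functions denote the same element of
   C(F) iff they agree on F. *)
Definition contF {R : realType} {K : topologicalType} (F : set K) (f : K -> R) :=
  {within F, continuous f}.

Definition extension_operator {R : realType} {K : topologicalType}
    (F : set K) (E : (K -> R) -> (K -> R)) : Prop :=
  [/\ (forall f g, contF F f -> contF F g -> (forall x, F x -> f x = g x) ->
         E f = E g),
      (forall f, contF F f -> continuous (E f)),
      (forall (a : R) f g, contF F f -> contF F g ->
         E (fun x => a * f x + g x) = (fun x => a * E f x + E g x)),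
      (exists M : R, forall f, contF F f ->
         supn setT (E f) <= M * supn F f) &
      (forall f, contF F f -> forall x, F x -> E f x = f x)].

Definition extension_property (R : realType) (K : topologicalType) : Prop :=
  forall F : set K, closed F -> F !=set0 ->
    exists E : (K -> R) -> (K -> R), extension_operator F E.

Definition c0 {R : realType} {I : Type} (x : I -> R) : Prop :=
  forall e : R, 0 < e -> finite_set [set i | e <= `|x i|].

Definition c0_isometric_embedding {R : realType} {I : Type} {K : topologicalType}
    (S : (I -> R) -> (K -> R)) : Prop :=
  [/\ (forall x, c0 x -> continuous (S x)),
      (forall (a : R) x y, c0 x -> c0 y ->
         S (fun i => a * x i + y i) = (fun k => a * S x k + S y k)) &
      (forall x, c0 x -> supn setT (S x) = supn setT x)].

Definition image_complemented {R : realType} {I : Type} {K : topologicalType}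
    (S : (I -> R) -> (K -> R)) : Prop :=
  exists P : (K -> R) -> (K -> R),
    [/\ (forall f, continuous f -> continuous (P f)),
        (forall (a : R) f g, continuous f -> continuous g ->
           P (fun k => a * f k + g k) = (fun k => a * P f k + P g k)),
        (exists M : R, forall f, continuous f ->
           supn setT (P f) <= M * supn setT f),
        (forall f, continuous f -> exists2 x, c0 x & P f = S x) &
        (forall x, c0 x -> P (S x) = S x)].

(* Main.v *)
Require Import Defs.
From HB Require Import structures.
From mathcomp Require Import all_boot all_order all_algebra.
From mathcomp Require Import all_classical all_reals all_analysis.
From mathcomp Require Import ring.
Set Implicit Arguments. Unset Strict Implicit. Unset Printing Implicit Defensive.
Import Order.TTheory GRing.Theory Num.Theory numFieldNormedType.Exports.
Local Open Scope classical_set_scope.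
Local Open Scope ring_scope.

Lemma cont_ub (R : realType) (K : topologicalType) (h : K -> R) :
  compact [set: K] -> continuous h -> has_ubound [set `|h t| | t in [set: K]].
Proof.
move=> cK hc.
have nc : continuous (fun t => `|h t|).
  by move=> t; apply: cvg_norm; exact: hc.
have [->|ne] := eqVneq [set `|h t| | t in [set: K]] set0.
  by exists 0.
have := @compact_has_sup R _ ((set0P _).1 ne) (continuous_compact (continuous_subspaceT nc) cK).
by case.
Qed.

Lemma c0_ub (R : realType) (I : Type) (x : I -> R) :
  c0 x -> has_ubound [set `|x i| | i in [set: I]].
Proof.
move=> /(_ 1 ltr01) fin.
set B := [set `|x i| | i in [set i | 1 <= `|x i|]].
have cB : compact B by apply: finite_compact; exact: finite_image.
have [B0|ne] := eqVneq B set0.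
  exists 1 => _ [i _ <-]; rewrite leNgt; apply/negP => lt1.
  have : B `|x i| by exists i => //; exact: ltW.
  by rewrite B0.
have [_ [M MB]] := compact_has_sup ((set0P _).1 ne) cB.
exists (Num.max 1 M) => _ [i _ <-].
have [le1|lt1] := leP 1 `|x i|.
  by rewrite le_max MB ?orbT //; exists i.
by rewrite le_max ltW.
Qed.

Lemma le_supn (R : realType) T (A : set T) (f : T -> R) t :
  has_ubound [set `|f t| | t in A] -> A t -> `|f t| <= supn A f.
Proof. by move=> ub At; apply: ub_le_sup => //; exists t. Qed.

Lemma supn_ge0 (R : realType) T (A : set T) (f : T -> R) : 0 <= supn A f.
Proof.
rewrite /supn; have [[[y [t At _]] ub]|nhs] := pselect (has_sup [set `|f t| | t in A]).
  by apply: le_trans (normr_ge0 (f t)) _; apply: ub_le_sup => //; exists t.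
by rewrite sup_out.
Qed.

Lemma supn_le (R : realType) T (A : set T) (f : T -> R) M :
  (forall t, A t -> `|f t| <= M) -> 0 <= M -> supn A f <= M.
Proof.
move=> fM M0; rewrite /supn.
have [E0|ne] := eqVneq [set `|f t| | t in A] set0; first by rewrite E0 sup0.
by apply: ge_sup; [exact: (set0P _).1 ne| move=> _ [t At <-]; exact: fM].
Qed.

Lemma c0_lin (R : realType) I (a : R) (u v : I -> R) :
  c0 u -> c0 v -> c0 (fun j => a * u j + v j).
Proof.
move=> cu cv e e0.
have e20 : 0 < e / 2 by rewrite divr_gt0.
apply: (@sub_finite_set _ _ ([set j | e / 2 / (`|a| + 1) <= `|u j|] `|` [set j | e / 2 <= `|v j|])).
  move=> j /= eaj; apply: contrapT => /not_orP [/negP nu /negP nv].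
  rewrite -ltNge in nu; rewrite -ltNge in nv.
  have a1 : 0 < `|a| + 1 by rewrite ltr_pwDr.
  have : `|a * u j + v j| < e.
    apply: (le_lt_trans (ler_normD _ _)).
    rewrite [e](splitr e) normrM; apply: ltr_leD => //.
    rewrite ltr_pdivlMr // in nu.
    apply: (le_lt_trans _ nu); rewrite mulrC.
      by apply: ler_wpM2l => //; rewrite lerDl.
    exact: ltW.
  by rewrite ltNge eaj.
by rewrite finite_setU; split; [apply: cu; rewrite divr_gt0 // ltr_pwDr | exact: cv].
Qed.

Definition ev (R : realType) (I : Type) (i : I) : I -> R :=
  fun j => if `[< j = i >] then 1 else 0.

Lemma ev_c0 (R : realType) I (i : I) : c0 (@ev R I i).
Proof.
move=> e e0; apply: (@sub_finite_set _ _ [set i]); last exact: finite_set1.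
move=> j /=; rewrite /ev; case: asboolP => // _.
by rewrite normr0 leNgt e0.
Qed.

Lemma ev_supn (R : realType) I (i : I) : supn setT (@ev R I i) = 1.
Proof.
apply/eqP; rewrite eq_le; apply/andP; split.
  apply: supn_le => // j _; rewrite /ev; case: asboolP => _; by rewrite ?normr1 ?normr0.
have := @le_supn R I setT (@ev R I i) i (c0_ub (ev_c0 i)) Logic.I.
by rewrite /ev; case: asboolP => // _; rewrite normr1.
Qed.

Section Main.
Variables (R : realType) (K : topologicalType) (I : Type).
Variable S : (I -> R) -> (K -> R).
Hypothesis HS : c0_isometric_embedding S.
Hypothesis cK : compact [set: K].

Lemma S_norm_le x t : c0 x -> `|S x t| <= supn setT x.
Proof.
case: HS => Sc _ Si cx; rewrite -Si //.
by apply: le_supn => //; apply: cont_ub => //; exact: Sc.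
Qed.

Lemma key i (k : K) : `|S (ev R i) k| = 1 ->
  forall y, c0 y -> y i = 0 -> S y k = 0.
Proof.
case: HS => Sc Sl Si hse y cy yi.
set se := S (ev R i) k; set c := S y k; set s := supn setT y.
set t := s * Num.sg c * se.
set z := fun j => t * ev R i j + y j.
have cz : c0 z by apply: c0_lin => //; exact: ev_c0.
have se2 : se * se = 1 by rewrite -expr2 -real_normK ?num_real // hse expr1n.
have zs : supn setT z <= s.
  apply: supn_le; last exact: supn_ge0.
  move=> j _; rewrite /z /ev; case: asboolP => [->|_].
    rewrite yi mulr1 addr0 /t !normrM normr_sg hse mulr1 ger0_norm ?supn_ge0 //.
    by case: (c != 0); rewrite ?mulr1 ?mulr0 ?supn_ge0.
  by rewrite mulr0 add0r; apply: le_supn => //; exact: c0_ub.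
have Szk : S z k = Num.sg c * (s + `|c|).
  rewrite /z Sl //; last exact: ev_c0.
  rewrite -/se -/c /t -mulrA se2 mulr1 mulrDr -numEsg.
  by rewrite mulrC.
have := S_norm_le k cz; rewrite Szk.
have [->//|cn0] := eqVneq c 0.
rewrite normrM normr_sg cn0 mul1r ger0_norm; last by rewrite addr_ge0 ?supn_ge0.
move=> h; have : s + `|c| <= s by apply: le_trans h zs.
by rewrite gerDl normr_le0 (negbTE cn0).
Qed.

Lemma S_at i (k : K) : `|S (ev R i) k| = 1 ->
  forall x, c0 x -> S x k = x i * S (ev R i) k.
Proof.
move=> hse x cx.
have cy : c0 (fun j => - x i * ev R i j + x j) by apply: c0_lin => //; exact: ev_c0.
have := key hse cy.
case: HS => _ Sl _; rewrite Sl //; last exact: ev_c0.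
rewrite /ev; case: asboolP => // _; rewrite mulr1 addNr => /(_ erefl).
by move/eqP; rewrite mulNr addrC subr_eq0 => /eqP.
Qed.

End Main.

Definition Lset (K : topologicalType) (I : Type) (k : I -> K) : set K :=
  [set p | forall V, nbhs p V -> forall A : set I, finite_set A ->
     exists j, ~ A j /\ V (k j)].

Lemma Lset_closed (K : topologicalType) (I : Type) (k : I -> K) :
  closed (Lset k).
Proof.
move=> p clp V pV A fA.
have [q [Lq iq]] := clp _ (nbhs_interior pV).
exact: Lq V iq A fA.
Qed.

Lemma Sx_L (R : realType) (K : topologicalType) (I : Type)
  (S : (I -> R) -> (K -> R)) (k : I -> K) :
  c0_isometric_embedding S -> compact [set: K] ->
  (forall i, `|S (ev R i) (k i)| = 1) ->
  forall x, c0 x -> forall p, Lset k p -> S x p = 0.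
Proof.
move=> HS cK hk x cx p Lp.
have Sxk : forall j, `|S x (k j)| = `|x j|.
  by move=> j; rewrite (S_at HS cK (hk j) cx) normrM hk mulr1.
apply/eqP/negP => /negP cn0.
set c := `|S x p|.
have c0' : 0 < c by rewrite normr_gt0.
have c20 : 0 < c / 2 by rewrite divr_gt0.
case: (HS) => Sc _ _.
have nV : \forall t \near p, `|S x p - S x t| < c / 2.
  exact: (cvgr_dist_lt _ _ (Sc x cx p) _ c20).
move: nV; rewrite -nbhs_nearE => nV.
have [j [Fj Vj]] := Lp _ nV _ (cx _ c20).
move: Vj => /= Vj.
have : c <= `|S x p - S x (k j)| + `|S x (k j)|.
  by have := ler_normD (S x p - S x (k j)) (S x (k j)); rewrite subrK.
rewrite Sxk; move: Fj => /negP; rewrite -ltNge => xj.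
have := ltrD Vj xj; rewrite -splitr => h1 h2.
by have := le_lt_trans h2 h1; rewrite ltxx.
Qed.

Lemma c0_h (R : realType) (K : topologicalType) (I : Type) (k : I -> K)
  (h : K -> R) (s : I -> R) : compact [set: K] -> (forall i, `|s i| = 1) ->
  continuous h -> (forall p, Lset k p -> h p = 0) ->
  c0 (fun i => h (k i) * s i).
Proof.
move=> cK hs hc hL e e0; apply: contrapT => infA.
set A := [set i | e <= `|h (k i) * s i|].
set G := fun B : set K => exists F : set I,
  finite_set F /\ forall j, A j -> ~ F j -> B (k j).
have PG : ProperFilter G.
  split.
  - move=> [F [fF FB]].
    have [j [Aj nFj]] := infinite_setN0 (infinite_setD infA fF).
    exact: FB j Aj nFj.
  - split.
    + by exists set0; split => //; exact: finite_set0.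
    + move=> B1 B2 [F1 [f1 H1]] [F2 [f2 H2]]; exists (F1 `|` F2).
      split; first by rewrite finite_setU.
      move=> j Aj nF; split.
        by apply: H1 => // ?; apply: nF; left.
      by apply: H2 => // ?; apply: nF; right.
    + move=> B1 B2 sB [F [fF H]]; exists F; split => // j Aj nF.
      exact/sB/H.
have [p [_ clp]] := cK G PG filterT.
have Lp : Lset k p.
  move=> V pV F fF.
  have GB : G [set q | exists j, A j /\ ~ F j /\ q = k j].
    by exists F; split => // j Aj nF; exists j.
  have [_ [[j [Aj [nFj ->]]] Vj]] := clp _ _ GB pV.
  by exists j.
have hp := hL p Lp.
have nV : \forall t \near p, `|h p - h t| < e.
  exact: (cvgr_dist_lt _ _ (hc p) _ e0).
have GA : G [set q | exists j, A j /\ q = k j].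
  by exists set0; split; [exact: finite_set0| move=> j Aj _; exists j].
have [_ [[j [Aj ->]] Vj]] := clp _ _ GA nV.
move: Vj Aj; rewrite /A /= hp sub0r normrN normrM hs mulr1 => lt le.
by have := lt_le_trans lt le; rewrite ltxx.
Qed.

Theorem corollary2p6 (R : realType) (K : topologicalType) (I : Type) :
  hausdorff_space K -> compact [set: K] -> extension_property R K ->
  forall S : (I -> R) -> (K -> R),
    c0_isometric_embedding S -> image_complemented S.
Proof.
move=> _ cK EP S HS; case: (HS) => Sc Sl Si.
have hk : forall i, exists k0 : K, `|S (ev R i) k0| = 1.
  move=> i; have ci := @ev_c0 R I i.
  have [[t0 _]|nK] := pselect (exists t : K, True); last first.
    have : supn setT (S (ev R i)) = 0.
      rewrite /supn; suff -> : [set `|S (ev R i) t| | t in [set: K]] = set0.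
        by rewrite sup0.
      by apply/seteqP; split => // y [t1 _ _]; apply: nK; exact: (ex_intro _ t1 Logic.I).
    by rewrite Si // ev_supn => /eqP; rewrite oner_eq0.
  have nc : continuous (fun t => `|S (ev R i) t|).
    by move=> t; apply: cvg_norm; exact: Sc.
  have [c _ cmax] := compact_EVT_max (ex_intro _ t0 Logic.I) cK
    (continuous_subspaceT nc).
  exists c; apply/eqP; rewrite eq_le; apply/andP; split.
    by have := S_norm_le HS cK c ci; rewrite ev_supn.
  rewrite -(ev_supn R i) -Si //; apply: supn_le => // t _.
  exact: cmax (in_setT t).
have /choice [k hk'] := hk.
pose L := Lset k.
have [G [G1 G2 G3 [M M0 G4] G5]] : exists G : (K -> R) -> (K -> R),
  [/\ forall f, continuous f -> continuous (G f),
      forall f, continuous f -> forall p, L p -> G f p = f p,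
      forall (a : R) (f g : K -> R), continuous f -> continuous g ->
        G (fun t => a * f t + g t) = (fun t => a * G f t + G g t),
      exists2 M, 0 <= M & forall f, continuous f -> forall t,
        `|G f t| <= M * supn setT f &
      forall f, continuous f -> (forall p, L p -> f p = 0) ->
        G f = (fun _ => 0)].
  have [L0|Lne] := eqVneq L set0.
    exists (fun _ _ => 0); split => //.
    - by move=> f _; exact: cst_continuous.
    - move=> f _ p Lp; have : (set0 : set K) p by rewrite -L0.
      by [].
    - by move=> a f g _ _; apply/funext => t; rewrite mulr0 addr0.
    - by exists 0 => // f _ t; rewrite normr0 mul0r.
  have [E [E1 E2 E3 [N EN] E5]] := EP L (@Lset_closed K I k) ((set0P _).1 Lne).
  have ct : forall f : K -> R, continuous f -> contF L f.
    by move=> f cf; exact: continuous_subspaceT.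
  exists E; split.
  - by move=> f cf; apply: E2; exact: ct.
  - by move=> f cf; apply: E5; exact: ct.
  - by move=> a f g cf cg; apply: E3; exact: ct.
  - exists `|N| => // f cf t.
    have h1 : `|E f t| <= supn setT (E f).
      by apply: le_supn => //; apply: cont_ub => //; apply: E2; exact: ct.
    have h2 := EN f (ct f cf).
    have h3 : supn L f <= supn setT f.
      apply: supn_le; last exact: supn_ge0.
      by move=> p _; apply: le_supn => //; exact: cont_ub.
    apply: (le_trans h1); apply: (le_trans h2).
    apply: le_trans (ler_wpM2l (normr_ge0 N) h3).
    by apply: ler_wpM2r; [exact: supn_ge0 | exact: ler_norm].
  - move=> f cf fL.
    have cz : contF L (fun _ : K => 0 : R).
      by apply: continuous_subspaceT => t; exact: cvg_cst.
    rewrite (E1 f (fun _ => 0) (ct f cf) cz fL).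
    have H := E3 (-1) _ _ cz cz.
    have e : (fun x : K => -1 * 0 + 0) = (fun _ => 0 :> R).
      by apply/funext => x; rewrite mulr0 addr0.
    rewrite e in H; apply/funext => t; rewrite H /=.
    by rewrite mulN1r addNr.
pose s := fun i => S (ev R i) (k i).
have hs : forall i, `|s i| = 1 by move=> i; exact: hk'.
pose xf := fun (f : K -> R) i => (f (k i) - G f (k i)) * s i.
have xc0 : forall f, continuous f -> c0 (xf f).
  move=> f cf; apply: (@c0_h R K I k (fun t => f t - G f t) s cK hs).
    by move=> t; apply: cvgB; [exact: cf | exact: G1].
  by move=> p Lp; rewrite /= G2 // subrr.
exists (fun f => S (xf f)); split.
- by move=> f cf; exact: Sc (xc0 f cf).
- move=> a f g cf cg.
  have cfg : continuous (fun t => a * f t + g t).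
    by move=> t; apply: cvgD; [apply: cvgM; [exact: cvg_cst | exact: cf] | exact: cg].
  rewrite -Sl; [|exact: xc0|exact: xc0].
  congr S; apply/funext => i; rewrite /xf G3 //=; ring.
- exists (1 + M) => f cf.
  rewrite Si; last exact: xc0.
  apply: supn_le; last by rewrite mulr_ge0 ?supn_ge0 // addr_ge0.
  move=> i _; rewrite /xf normrM hs mulr1.
  apply: le_trans (ler_normB _ _) _.
  rewrite mulrDl mul1r; apply: lerD; last exact: G4.
  by apply: le_supn => //; exact: cont_ub.
- by move=> f cf; exists (xf f) => //; exact: xc0.
- move=> x cx; congr S; apply/funext => i.
  rewrite /xf G5; [|exact: Sc|move=> p Lp]; last first.
    exact: (@Sx_L R K I S k HS cK hk' x cx p Lp).
  rewrite /= subr0 (S_at HS cK (hk' i) cx) -mulrA /s -expr2 -real_normK ?num_real //.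
  by rewrite hk' expr1n mulr1.
Qed.
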